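(* Let $m \equiv 3 \pmod 4$ with $m > 3$, $n = 3^m - 1$, $v = (3^{(m+1)/2}+1)/2$ and $\delta = (3^{(m-1)/2}+7)/2$. Then $\gcd(v,n) = 1$, and, setting $T_{(2,3,m)}(v) = \{ vi \bmod n : i \in T_{(2,3,m)}\}$, we have $\{n-(\delta-1), \ldots, n-2, n-1\} \subseteq T_{(2,3,m)}(v)$.
   Context: For an integer $0 \le j \le n-1$ with $3$-adic expansion $j = \sum_{t=0}^{m-1} j_t 3^t$, $j_t \in \{0,1,2\}$, let $w_3(j) = \sum_{t=0}^{m-1} j_t$. For distinct $i_1,i_2 \in \{0,1,2,3\}$, $T_{(i_1,i_2,m)} = \{1 \le j \le n-1 : w_3(j) \equiv i_1 \text{ or } i_2 \pmod 4\}$. For an integer $b$, $b \bmod n$ is the unique $b_0 \in \{0,\ldots,n-1\}$ with $b \equiv b_0 \pmod n$. *)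

(* Defs.v *)
From mathcomp Require Import all_boot.
Set Implicit Arguments. Unset Strict Implicit. Unset Printing Implicit Defensive.

Fixpoint digsum3 (fuel j : nat) : nat :=
  match fuel with
  | 0 => 0
  | f.+1 => j %% 3 + digsum3 f (j %/ 3)
  end.

(* w_3(j): sum of the 3-adic digits of j (fuel j suffices since j %/ 3 < j for j > 0). *)
Definition w3 (j : nat) : nat := digsum3 j j.

Definition T_set (i1 i2 m : nat) : pred nat :=
  fun j => (1 <= j <= 3 ^ m - 2) && ((w3 j %% 4 == i1) || (w3 j %% 4 == i2)).

(* Main.v *)
Require Import Defs.
From mathcomp Require Import all_boot zify ring.
From mathcomp Require Import all_algebra.

Lemma digsum3_0 f : digsum3 f 0 = 0.
Proof. by elim: f => //= f ->. Qed.

Lemma digsum3_fuel f j : j <= f -> digsum3 f j = w3 j.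
Proof.
rewrite /w3.
suff H : forall f g j, j <= f -> j <= g -> digsum3 f j = digsum3 g j.
  by move=> Hj; apply: H.
move=> {f j}; elim=> [|f IH] [|g] j /= Hf Hg.
- by [].
- have -> : j = 0 by lia. by rewrite digsum3_0.
- have -> : j = 0 by lia. by rewrite digsum3_0 /=; rewrite ?digsum3_0.
- congr (_ + _); apply: IH.
  + case: j Hf Hg => [|j] Hf Hg; first by rewrite div0n.
    have := leq_div j.+1 3; lia.
  + case: j Hf Hg => [|j] Hf Hg; first by rewrite div0n.
    have := leq_div j.+1 3; lia.
Qed.

Lemma w3S a d : d < 3 -> w3 (3 * a + d) = d + w3 a.
Proof.
move=> Hd.
case E: (3 * a + d) => [|f].
  have -> : a = 0 by lia. have -> : d = 0 by lia. by rewrite /w3.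
rewrite /w3 /= -E.
have -> : (3 * a + d) %% 3 = d by lia.
have -> : (3 * a + d) %/ 3 = a by lia.
by rewrite digsum3_fuel //; lia.
Qed.

Lemma w3_0 : w3 0 = 0. Proof. by []. Qed.

Lemma w3_split k a b : b < 3 ^ k -> w3 (a * 3 ^ k + b) = w3 a + w3 b.
Proof.
elim: k b => [|k IH] b Hb.
  have -> : b = 0 by rewrite expn0 in Hb; lia.
  by rewrite expn0 muln1 addn0 w3_0 addn0.
have Hb3 : b %/ 3 < 3 ^ k.
  rewrite expnS in Hb. rewrite ltn_divLR //; lia.
have -> : a * 3 ^ k.+1 + b = 3 * (a * 3 ^ k + b %/ 3) + b %% 3.
  rewrite {3}(divn_eq b 3) expnS; lia.
rewrite w3S ?ltn_mod // IH //.
have Eb : w3 b = b %% 3 + w3 (b %/ 3) by rewrite -w3S ?ltn_mod //; congr w3; lia.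
rewrite Eb; lia.
Qed.

Lemma w3_compl k x : x < 3 ^ k -> w3 (3 ^ k - 1 - x) + w3 x = 2 * k.
Proof.
elim: k x => [|k IH] x Hx.
  have -> : x = 0 by rewrite expn0 in Hx; lia. by [].
have Hq : x %/ 3 < 3 ^ k.
  rewrite expnS in Hx. rewrite ltn_divLR //; lia.
have Hpos : 0 < 3 ^ k by rewrite expn_gt0.
have -> : 3 ^ k.+1 - 1 - x = 3 * (3 ^ k - 1 - x %/ 3) + (2 - x %% 3).
  have := ltn_mod x 3. rewrite {1}(divn_eq x 3) expnS; lia.
rewrite w3S; last by lia.
have Ex : w3 x = x %% 3 + w3 (x %/ 3) by rewrite -w3S ?ltn_mod //; congr w3; lia.
rewrite Ex.
have := IH _ Hq. have := ltn_mod x 3. lia.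
Qed.

Section IntIds.
Import GRing.Theory.
Local Open Scope ring_scope.
Lemma even_id (b s u : nat) : (1 <= s)%N -> (s + u = b + 2)%N -> (1 <= b)%N ->
 ((6*b+5) * ((2*b+2*u-1)*(12*b+9) + (2*s-1)) + 2*s = (3*b+3*u-1)*(48*b*b+72*b+26))%N.
Proof.
move=> hs hsu hb.
suff H : Posz ((6*b+5) * ((2*b+2*u-1)*(12*b+9) + (2*s-1)) + 2*s)%N = Posz ((3*b+3*u-1)*(48*b*b+72*b+26))%N by case: H.
have e1 : Posz (2*b+2*u-1)%N = 2*b%:Z+2*u%:Z-1 by rewrite -subzn //; lia.
have e2 : Posz (2*s-1)%N = 2*s%:Z-1 by rewrite -subzn //; lia.
have e3 : Posz (3*b+3*u-1)%N = 3*b%:Z+3*u%:Z-1 by rewrite -subzn //; lia.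
have e4 : s%:Z = b%:Z + 2 - u%:Z by lia.
rewrite !(PoszD, PoszM) e1 e2 e3 e4 /=. ring.
Qed.
End IntIds.

Lemma odd_id (s u : nat) :
  (6*(s+u)+5)*(2*u*(12*(s+u)+9)+(4*(s+u)+3+(2*(s+u)+2*s+2)))+(2*s+1)
  = (3*u+1)*(48*(s+u)*(s+u)+72*(s+u)+26).
Proof. ring. Qed.

Lemma edge_id (b : nat) :
  (6*b+5)*((4*b+1)*(12*b+9)+2*(4*b+3))+(2*b+3) = (6*b+3)*(48*b*b+72*b+26).
Proof. ring. Qed.

Lemma cop_id (b : nat) :
  (6*b+5)*(24*b*b+48*b+21) = (3*b+4)*(48*b*b+72*b+26) + 1.
Proof. ring. Qed.

Lemma modeq (x r n c : nat) : x + r = c * n -> 1 <= r <= n -> x %% n = n - r.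
Proof.
move=> H /andP[h1 h2].
case: c H => [|c] H; first by rewrite mul0n in H; lia.
have -> : x = c * n + (n - r) by rewrite mulSn in H; lia.
rewrite modnMDl modn_small //; lia.
Qed.

Lemma core (q b r : nat) :
  3 ^ (2*q+1) = 4 * b + 3 -> 6 <= b -> 1 <= r <= 2 * b + 4 ->
  exists i, (1 <= i <= 48*b*b+72*b+25) && ((w3 i %% 4 == 2) || (w3 i %% 4 == 3))
   /\ ((6*b+5) * i) %% (48*b*b+72*b+26) = 48*b*b+72*b+26 - r.
Proof.
move=> hPb hb hr.
have e3h : 3 ^ (2*q+1).+1 = 12 * b + 9 by rewrite expnS hPb; lia.
have [s [hs|hs]] : exists s, r = 2 * s \/ r = 2 * s + 1.
  by exists (r %/ 2); move: hr; clear; lia.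
-
  have [u hsu] : exists u, s + u = b + 2 by exists (b + 2 - s); move: hs hr; clear; lia.
  have hs1 : 1 <= s by move: hs hr; clear; lia.
  have hY : 2 * s - 1 < 3 ^ (2*q+1) by rewrite hPb; move: hsu hb; clear; lia.
  exists ((2*b+2*u-1) * 3 ^ (2*q+1).+1 + (2 * s - 1)); split.
    apply/andP; split.
      rewrite e3h.
      have HZ : (2*b+2*u-1) * (12*b+9) <= (4*b+1)*(12*b+9) by apply: leq_mul; move: hsu hs1 hb; clear; lia.
      move: HZ; move: ((2*b+2*u-1) * (12*b+9)) => Z HZ.
      move: HZ hsu hs1 hb; clear; lia.
    rewrite w3_split; last by rewrite e3h; move: hsu hs1 hb; clear; lia.
    have hX : 2*b+2*u-1 = 3 ^ (2*q+1) - 1 - (2 * s - 1) by rewrite hPb; move: hsu hs1 hb; clear; lia.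
    rewrite hX (w3_compl _ _ hY).
    apply/orP; left; apply/eqP; clear; lia.
  rewrite e3h; apply: (@modeq _ _ _ (3*b+3*u-1)).
    rewrite hs; apply: even_id => //; move: hb; clear; lia.
  move: hr; clear; lia.
- have [hsb|hsb] := leqP s b.
  + have [u hsu] : exists u, b = s + u by exists (b - s); move: hsb; clear; lia.
    have hY : 2 * b + 2 * s + 2 < 3 ^ (2*q+1) by rewrite hPb; move: hsu hb; clear; lia.
    have hY2 : 2 * u < 3 ^ (2*q+1) by rewrite hPb; move: hsu hb; clear; lia.
    exists (2 * u * 3 ^ (2*q+1).+1 + (1 * 3 ^ (2*q+1) + (2 * b + 2 * s + 2))); split.
      apply/andP; split.
        rewrite e3h hPb.
        have : u * (12*b+9) <= b * (12*b+9) by apply: leq_mul; move: hsu hb; clear; lia.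
        move: hsu hb; clear; lia.
      rewrite w3_split; last by rewrite e3h hPb; move: hsu hb; clear; lia.
      rewrite w3_split //.
      have hX : 2 * b + 2 * s + 2 = 3 ^ (2*q+1) - 1 - 2 * u by rewrite hPb; move: hsu hb; clear; lia.
      rewrite {2}hX.
      have := w3_compl _ _ hY2.
      have -> : w3 1 = 1 by [].
      move=> H; apply/orP; right; apply/eqP; move: H; clear; lia.
    rewrite e3h hPb; apply: (@modeq _ _ _ (3*u+1)).
      rewrite hs hsu mul1n; exact: odd_id.
    move: hr; clear; lia.
  + have hrb : r = 2 * b + 3 by move: hs hsb hr; clear; lia.
    have h1 : 1 < 3 ^ (2*q+1) by rewrite hPb; clear; lia.
    exists ((3 ^ (2*q+1) - 1 - 1) * 3 ^ (2*q+1).+1 + (2 * 3 ^ (2*q+1) + 0)); split.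
      apply/andP; split.
        rewrite e3h hPb (_ : 4 * b + 3 - 1 - 1 = 4 * b + 1); last by clear; lia.
        move: hb; clear; lia.
      rewrite w3_split; last by rewrite e3h hPb; clear; lia.
      rewrite w3_split ?expn_gt0 //.
      have := w3_compl _ _ h1.
      have -> : w3 1 = 1 by [].
      have -> : w3 2 = 2 by [].
      have -> : w3 0 = 0 by [].
      move=> H; apply/orP; right; apply/eqP; move: H; clear; lia.
    rewrite e3h hPb; apply: (@modeq _ _ _ (6*b+3)).
      rewrite hrb (_ : 4 * b + 3 - 1 - 1 = 4 * b + 1); last by clear; lia.
      rewrite addn0; exact: edge_id.
    move: hr; clear; lia.
Qed.

Theorem lemma8 (m : nat) :
  m %% 4 = 3 -> 3 < m ->
  let n := 3 ^ m - 1 in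
  let v := (3 ^ ((m + 1) %/ 2) + 1) %/ 2 in
  let delta := (3 ^ ((m - 1) %/ 2) + 7) %/ 2 in
  coprime v n /\
  (forall k, n - (delta - 1) <= k <= n - 1 ->
     exists i, T_set 2 3 m i /\ k = (v * i) %% n).
Proof.
move=> Hm Hm3 n v delta.
have [q hq] : exists q, m = 4 * q + 3 by exists (m %/ 4); lia.
have hq1 : 1 <= q by lia.
have hP4 : 3 ^ (2*q+1) %% 4 = 3.
  by rewrite expnD expnM expn1 -modnMml -modnXm (_ : 3 ^ 2 %% 4 = 1) // exp1n modn_small.
have [b hPb] : exists b, 3 ^ (2*q+1) = 4 * b + 3.
  by exists (3 ^ (2*q+1) %/ 4); rewrite {1}(divn_eq (3 ^ (2*q+1)) 4) hP4 mulnC.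
have hb : 6 <= b.
  have : 3 ^ 3 <= 3 ^ (2*q+1) by rewrite leq_exp2l //; lia.
  rewrite hPb /=; lia.
have e3h : 3 ^ (2*q+1).+1 = 12 * b + 9 by rewrite expnS hPb; lia.
have e3m : 3 ^ m = 3 * (4 * b + 3) * (4 * b + 3).
  rewrite hq (_ : 4 * q + 3 = (2*q+1) + (2*q+1) + 1); last by lia.
  rewrite expnD expnD hPb expn1; lia.
have hn : n = 48*b*b+72*b+26 by rewrite /n e3m; lia.
have hv : v = 6 * b + 5.
  rewrite /v (_ : (m + 1) %/ 2 = (2*q+1).+1); last by lia.
  rewrite e3h; lia.
have hd : delta = 2 * b + 5.
  rewrite /delta (_ : (m - 1) %/ 2 = 2*q+1); last by lia.
  rewrite hPb; lia.
have hm2 : 3 ^ m - 2 = 48*b*b+72*b+25 by rewrite e3m; lia.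
split.
  rewrite hv hn /coprime; apply/eqP.
  have h1 : gcdn (6*b+5) (48*b*b+72*b+26) %| (6*b+5)*(24*b*b+48*b+21).
    exact: dvdn_mulr (dvdn_gcdl _ _).
  have h2 : gcdn (6*b+5) (48*b*b+72*b+26) %| (3*b+4)*(48*b*b+72*b+26).
    exact: dvdn_mull (dvdn_gcdr _ _).
  rewrite cop_id (dvdn_addr _ h2) dvdn1 in h1.
  exact/eqP.
move=> k /andP[hk1 hk2].
rewrite hd hn in hk1 hk2.
have hr : 1 <= 48*b*b+72*b+26 - k <= 2 * b + 4 by move: hk1 hk2 hb; clear; lia.
have [i [Hi1 Hi2]] := core _ _ _ hPb hb hr.
exists i; split.
  by rewrite /T_set hm2.
rewrite hv hn Hi2; move: hk1 hk2 hb; clear; lia.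
Qed.
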